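(* Let $k\ge1$, $m_1,\dots,m_k\ge1$ integers, $s_1,\dots,s_k\in\{-1,1\}$, $w=m_1+\dots+m_k$, and let $\mathcal S(\zeta(m_1,\dots,m_k;s_1,\dots,s_k))$ denote the symbol defined in the context. (1) If at least one $m_i$ is different from $1$ and $(m_1,s_1)\neq(1,1)$, then $\mathcal S(\zeta(m_1,\dots,m_k;s_1,\dots,s_k))=0$. (2) For every $m\ge1$ and all $s_2,\dots,s_m\in\{-1,1\}$, $\mathcal S(\zeta(1,\dots,1;-1,s_2,\dots,s_m))=(1/2)^{\otimes m}$ $(=(-1)^m\,2^{\otimes m})$, i.e. it equals the symbol of $\frac{1}{m!}\ln^m\frac12$, so that $\mathcal S\big(\zeta(1,\dots,1;-1,s_2,\dots,s_m)-\frac1{m!}\ln^m\frac12\big)=0$.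
   Context: Colored multiple zeta values: $\zeta(m_1,\dots,m_k;s_1,\dots,s_k)=\sum_{0<n_1<\dots<n_k}\frac{s_1^{n_1}\cdots s_k^{n_k}}{n_1^{m_1}\cdots n_k^{m_k}}$. Put $\hat s_j=\prod_{i\le j}s_i$. Symbol calculus over $\mathbb Q$: let $V=\mathbb Q^\times\otimes_{\mathbb Z}\mathbb Q$ (a $\mathbb Q$-vector space in which torsion, in particular $-1$, becomes $0$); for $f\in\mathbb Q^\times$ write $f$ also for its image in $V$, so e.g. $(1/2)=-2$ in $V$. Tensors are taken in $V^{\otimes n}$, multilinear in the multiplicative sense ($\cdots\otimes(fg)\otimes\cdots=\cdots\otimes f\otimes\cdots+\cdots\otimes g\otimes\cdots$), and any formal tensor one of whose factors is the number $0$ is interpreted as $0\in V^{\otimes n}$. For $x,y$ define $\mu(x,y)=1-y/x$ if $x\neq0$ and $\mu(0,y)=y$. For a tuple $(a_1,\dots,a_n)$, $n\ge2$ (the ''decorated polygon'' $P(a_1,\dots,a_n)$ with root decoration $a_n$, attached to the multiple polylogarithm $G(a_{n-1},\dots,a_1;a_n)$), define $\mathcal S(a_1,\dots,a_n)\in V^{\otimes(n-1)}$ recursively by $\mathcal S(a_1,a_2)=\mu(a_1,a_2)$ and, for $n\ge3$, $\mathcal S(a_1,\dots,a_n)=\sum_{i=1}^{n-1}\mathcal S(a_1,\dots,\widehat{a_i},\dots,a_n)\otimes\mu(a_i,a_{i+1})-\sum_{i=2}^{n-1}\mathcal S(a_1,\dots,\widehat{a_i},\dots,a_n)\otimes\mu(a_i,a_{i-1})$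 (hat = omitted). The symbol of a colored MZV is defined as $\mathcal S(\zeta(m_1,\dots,m_k;s_1,\dots,s_k))=(-1)^w\,\mathcal S(\underbrace{0,\dots,0}_{m_k-1},\hat s_k,\underbrace{0,\dots,0}_{m_{k-1}-1},\hat s_{k-1},\dots,\underbrace{0,\dots,0}_{m_1-1},\hat s_1,1)$. The symbol of $\frac1{m!}\ln^m c$ is $c^{\otimes m}=c\otimes\cdots\otimes c$ ($m$ factors). *)

(* Defs.v *)
From HB Require Import structures.
From mathcomp Require Import all_boot all_order all_algebra.
Set Implicit Arguments. Unset Strict Implicit. Unset Printing Implicit Defensive.
Import Order.TTheory GRing.Theory Num.Theory.
Local Open Scope ring_scope.

(* ---------- Model of V^{\otimes n}, V = Q^x \otimes_Z Q ----------------
   V is identified with (+)_{p prime} Q via p-adic valuations, so V^{\otimes n}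
   is identified with finitely supported functions on n-tuples of primes.
   A formal tensor is a finite Q-linear combination of pure tensors
   f_1 (x) ... (x) f_n with f_i in Q; its coordinate at (p_1,...,p_n) is
   sum c * prod_i v_{p_i}(f_i).  The valuation of the number 0 is set to 0,
   which implements the convention that a tensor with a factor 0 is 0. *)

Definition ftensor := seq (rat * seq rat).

Definition vq (p : nat) (q : rat) : rat :=
  (logn p `|numq q|%N)%:R - (logn p `|denq q|%N)%:R.

Definition pure_coord (l : seq rat) (ps : seq nat) : rat :=
  if size l == size ps then \prod_(i < size l) vq (nth 0%N ps i) (nth 0 l i)
  else 0.

Definition coord (T : ftensor) (ps : seq nat) : rat :=
  \sum_(t <- T) t.1 * pure_coord t.2 ps.

Definition teq (T1 T2 : ftensor) : Prop := forall ps, coord T1 ps = coord T2 ps.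

Definition tsing (f : seq rat) : ftensor := [:: (1, f)].
Definition tapp (T : ftensor) (f : rat) : ftensor :=
  [seq (t.1, rcons t.2 f) | t <- T].
Definition tscale (c : rat) (T : ftensor) : ftensor :=
  [seq (c * t.1, t.2) | t <- T].

Definition mu (x y : rat) : rat := if x == 0 then y else 1 - y / x.

Definition del (i : nat) (a : seq rat) : seq rat := take i a ++ drop i.+1 a.

Fixpoint symb_fuel (fuel : nat) (a : seq rat) : ftensor :=
  match fuel with
  | 0%N => [::]
  | fuel'.+1 =>
    if size a == 2%N then tsing [:: mu (nth 0 a 0) (nth 0 a 1)]
    else if (size a < 2)%N then [::]
    else
      flatten [seq tapp (symb_fuel fuel' (del i a)) (mu (nth 0 a i) (nth 0 a i.+1))
              | i <- iota 0 (size a).-1]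
      ++ tscale (-1)
      (flatten [seq tapp (symb_fuel fuel' (del i a)) (mu (nth 0 a i) (nth 0 a i.-1))
              | i <- iota 1 (size a).-2])
  end.

Definition symb (a : seq rat) : ftensor := symb_fuel (size a) a.

Definition shat (s : seq rat) (j : nat) : rat := \prod_(i < j.+1) nth 0 s i.

(* the word (0^{m_k-1}, hat s_k, ..., 0^{m_1-1}, hat s_1, 1) *)
Definition zeta_word (m : seq nat) (s : seq rat) : seq rat :=
  flatten [seq nseq (nth 0%N m j).-1 0 ++ [:: shat s j] | j <- rev (iota 0 (size m))]
  ++ [:: 1].

Definition zeta_symb (m : seq nat) (s : seq rat) : ftensor :=
  tscale ((-1) ^+ sumn m) (symb (zeta_word m s)).

(* Main.v *)
Require Import Defs.
From HB Require Import structures.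
From mathcomp Require Import all_boot all_order all_algebra zify ring lra.
Import Order.TTheory GRing.Theory Num.Theory.
Local Open Scope ring_scope.
Local Notation coord := Defs.coord.

Lemma coord_cat (T1 T2 : ftensor) ps : coord (T1 ++ T2)%SEQ ps = coord T1 ps + coord T2 ps.
Proof. by rewrite /coord big_cat. Qed.

Lemma coord_tscale c T ps : coord (tscale c T) ps = c * coord T ps.
Proof. by rewrite /coord big_map mulr_sumr; apply: eq_bigr => t _ /=; rewrite mulrA. Qed.

Lemma coord_flatten (F : nat -> ftensor) s ps :
  coord (flatten [seq F i | i <- s]) ps = \sum_(i <- s) coord (F i) ps.
Proof.
elim: s => [|i s IH]; first by rewrite big_nil /coord big_nil.
by rewrite /= coord_cat IH big_cons.
Qed.

Lemma pure_coord_rcons l f ps q :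
  pure_coord (rcons l f) (rcons ps q) = pure_coord l ps * vq q f.
Proof.
rewrite /pure_coord !size_rcons eqSS.
case: eqP => [E|_]; last by rewrite mul0r.
rewrite big_ord_recr /= !nth_rcons ltnn eqxx -E ltnn eqxx; congr (_ * _).
by apply: eq_bigr => i _; rewrite !nth_rcons -E ltn_ord.
Qed.

Lemma coord_tapp T f ps q : coord (tapp T f) (rcons ps q) = coord T ps * vq q f.
Proof.
rewrite /coord big_map mulr_suml; apply: eq_bigr => t _ /=.
by rewrite pure_coord_rcons mulrA.
Qed.

Lemma coord_tapp0 T f : coord (tapp T f) [::] = 0.
Proof.
rewrite /coord big_map big1 // => t _ /=.
by rewrite /pure_coord size_rcons /= mulr0.
Qed.
Definition inS (x : rat) := [|| x == 0, x == 1 | x == -1].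
Definition pm1 (x : rat) := (x == 1) || (x == -1).

Lemma inSP x : inS x -> [\/ x = 0, x = 1 | x = -1].
Proof. by case/or3P=> /eqP ->; [apply: Or31|apply: Or32|apply: Or33]. Qed.
Lemma pm1P x : pm1 x -> x = 1 \/ x = -1.
Proof. by case/orP=> /eqP ->; [left|right]. Qed.

Lemma logn2 q : logn q 2 = (q == 2%N).
Proof.
case: (eqVneq q 2%N) => [->|ne]; first by [].
rewrite lognE; case: (prime q) / idP => //= pq.
case dq: (q %| 2)%N => //; exfalso.
have := dvdn_leq (isT : (0 < 2)%N) dq; have := prime_gt1 pq.
by case: q ne pq dq => [|[|[|]]].
Qed.

Lemma vq0 q : vq q 0 = 0. Proof. by rewrite /vq /= logn0 logn1 subrr. Qed.
Lemma vq1 q : vq q 1 = 0. Proof. by rewrite /vq /= !logn1 subrr. Qed.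
Lemma vqN1 q : vq q (-1) = 0. Proof. by rewrite /vq /= !logn1 subrr. Qed.
Lemma vq2 q : vq q 2 = (q == 2%N)%:R.
Proof. by rewrite /vq /= logn2 logn1 subr0. Qed.
Lemma vqh q : vq q (1/2) = - (q == 2%N)%:R.
Proof. by rewrite /vq /= logn2 logn1 sub0r. Qed.

Lemma vq_mu q x y : inS x -> inS y ->
  vq q (mu x y) = if q == 2%N then vq 2 (mu x y) else 0.
Proof.
have h1 : (1 - -1/1 : rat) = 2 by [].
have h2 : (1 - 1/ -1 : rat) = 2 by [].
move=> /inSP[]-> /inSP[]->; rewrite /mu /=;
  case: eqP => [->|/eqP ne]; rewrite ?vq0 ?vq1 ?vqN1 ?h1 ?h2 ?vq2 //.
all: by rewrite (negbTE ne).
Qed.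

Lemma size_del i (a : seq rat) : (i < size a)%N -> size (del i a) = (size a).-1.
Proof. by move=> lt; rewrite /del size_cat size_take size_drop lt; lia. Qed.

Lemma mem_del x i (a : seq rat) : x \in del i a -> x \in a.
Proof.
by rewrite /del mem_cat => /orP[/mem_take|/mem_drop].
Qed.

Lemma all_del P i (a : seq rat) : all P a -> all P (del i a).
Proof. by move=> /allP H; apply/allP => x /mem_del /H. Qed.

Lemma del_split i (a : seq rat) : (i < size a)%N -> a = take i a ++ nth 0 a i :: drop i.+1 a.
Proof. by move=> lt; rewrite -(drop_nth 0 lt) cat_take_drop. Qed.

Lemma mem0_del i (a : seq rat) : 0 \in a -> nth 0 a i != 0 -> 0 \in del i a.
Proof.
move=> ina ne; case: (ltnP i (size a)) => lt; last by rewrite nth_default // eqxx in ne.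
move: ina; rewrite {1}(@del_split i a lt) /del !mem_cat in_cons.
by rewrite eq_sym (negbTE ne).
Qed.

Lemma del_catl i (b c : seq rat) : (i < size b)%N -> del i (b ++ c) = del i b ++ c.
Proof.
move=> lt; rewrite /del take_cat drop_cat lt.
case: (ltnP i.+1 (size b)) => lt2; first by rewrite catA.
have e : (i.+1 - size b = 0)%N by apply/eqP; rewrite subn_eq0.
by rewrite e drop0 (drop_oversize lt2) cats0.
Qed.

Lemma del_catr j (b c : seq rat) : del (size b + j) (b ++ c) = b ++ del j c.
Proof.
rewrite /del take_cat drop_cat ltnNge leq_addr /= addKn.
have -> : ((size b + j).+1 < size b)%N = false by apply/negbTE; rewrite -ltnNge; lia.
have -> : ((size b + j).+1 - size b = j.+1)%N by lia.
by rewrite catA.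
Qed.

Lemma symb_rec (a : seq rat) : (2 < size a)%N -> symb a =
  flatten [seq tapp (symb (del i a)) (mu (nth 0 a i) (nth 0 a i.+1)) | i <- iota 0 (size a).-1]
  ++ tscale (-1)
  (flatten [seq tapp (symb (del i a)) (mu (nth 0 a i) (nth 0 a i.-1)) | i <- iota 1 (size a).-2]).
Proof.
rewrite /symb; case E: (size a) => [|n] // lt /=.
rewrite E /= ifN; last by case: n lt {E} => [|[|]].
rewrite ifN; last by case: n lt {E} => [|[|]].
congr (flatten _ ++ tscale _ (flatten _)). all: apply/eq_in_map => i; rewrite mem_iota => /andP[_ h];
  rewrite size_del ?E //; lia.
Qed.

Definition G (a : seq rat) : rat :=
  let r := last 0 a in
  let k := find (fun y => y != r) (rev a) in
  if k == size a then 0 else (-1) ^+ k.-1 * ('C((size a).-2, k.-1))%:R.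

Lemma nseqSr (T : Type) n (x : T) : nseq n.+1 x = rcons (nseq n x) x.
Proof. by elim: n => //= n ->. Qed.

Lemma G_const n r : G (nseq n r) = 0.
Proof.
rewrite /G rev_nseq size_nseq hasNfind ?size_nseq ?eqxx //.
case: n => [|n] //; rewrite has_nseq /= negbK.
by elim: n => //=.
Qed.

Lemma G_dec b x t r : x != r ->
  G (b ++ x :: nseq t.+1 r) = (-1) ^+ t * ('C(size b + t, t))%:R.
Proof.
have L : forall (z : rat) n, last z (nseq n r) = if n is 0 then z else r.
  by move=> z; elim => //= -[|n] //=.
move=> ne; rewrite /G last_cat last_cons L.
rewrite rev_cat rev_cons rev_nseq cat_rcons find_cat has_nseq eqxx andbF size_nseq /= ne addn0 size_cat /= size_nseq.
have -> : (t.+1 == size b + t.+2)%N = false by apply/negbTE; lia.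
by rewrite addn0 !addnS.
Qed.

Lemma pm1_neq x y : pm1 x -> pm1 y -> x != y -> x = -y.
Proof. by move=> /pm1P[]-> /pm1P[]->. Qed.

Lemma decomp (a : seq rat) : all pm1 a ->
  (exists r, a = nseq (size a) r) \/
  exists b x t r, [/\ pm1 r, x = -r & a = b ++ x :: nseq t.+1 r].
Proof.
elim/last_ind: a => [|a y IH]; first by left; exists 0.
rewrite all_rcons => /andP[py pa].
case: (IH pa) => [[r' E]|[b [x [t [r [pr ex E]]]]]].
- move: pa; case: (size a) E => [|k] -> pa.
    by left; exists y.
  case: (eqVneq r' y) => [<-|ne].
    by left; exists r'; rewrite -nseqSr size_nseq.
  right; exists (nseq k r'), r', 0%N, y; split => //.
    by apply: pm1_neq => //; case/andP: pa.
  by rewrite nseqSr -!cats1 -!catA.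
- rewrite E; case: (eqVneq y r) => [->|ne].
    by right; exists b, x, t.+1, r; rewrite rcons_cat rcons_cons -nseqSr.
  right; exists (b ++ x :: nseq t r), r, 0%N, y; split => //.
    by rewrite (pm1_neq _ _ py pr ne) opprK.
  by rewrite nseqSr -!cats1 -!catA /= -!catA.
Qed.

Definition e (a : seq rat) (j : nat) : rat :=
  if j is j'.+1 then vq 2 (mu (nth 0 a j') (nth 0 a j)) else 0.

Lemma ind_pm1 x y : pm1 x -> pm1 y -> vq 2 (mu x y) = (x != y)%:R.
Proof. by move=> /pm1P[]-> /pm1P[]->. Qed.

Lemma mu_sym x y : pm1 x -> pm1 y -> mu x y = mu y x.
Proof. by move=> /pm1P[]-> /pm1P[]->. Qed.

Lemma pm1N r : pm1 r -> pm1 (-r).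
Proof. by move=> /pm1P[]->. Qed.

Lemma neqN r : pm1 r -> -r != r.
Proof. by move=> /pm1P[]->. Qed.

Lemma comb n (a : seq rat) : all pm1 a -> size a = n.+3 ->
  \sum_(0 <= i < n.+2) G (del i a) * (e a i.+1 - e a i) = G a.
Proof.
move=> pa sa; case: (decomp a pa) => [[r E]|[b [x [t [r [pr ex E]]]]]].
  have ar : all (pred1 r) a by rewrite E; apply/all_pred1P; rewrite size_nseq.
  rewrite E G_const big1 // => i _.
  by rewrite -E (all_pred1P _ _ (all_del _ i _ ar)) G_const mul0r.
set p := size b.
have spt : (p + t = n.+1)%N by move: sa; rewrite E size_cat /= size_nseq -/p; lia.
have px : pm1 x by rewrite ex pm1N.
have xr : x != r by rewrite ex neqN.
have nx : nth 0 a p = x by rewrite E nth_cat ltnn subnn.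
have nr : forall i, (p < i < p + t.+2)%N -> nth 0 a i = r.
  move=> i /andP[h1 h2]; rewrite E nth_cat ltnNge (ltnW h1) /=.
  have -> : (i - p = (i - p).-1.+1)%N by lia.
  change (nth 0 (nseq t.+1 r) (i - p).-1 = r); rewrite nth_nseq ifT //; lia.
have e0 : forall i, (p.+1 < i < p + t.+2)%N -> e a i = 0.
  move=> [|i] // /andP[h1 h2]; rewrite /= !nr ?ind_pm1 ?eqxx //.
    by apply/andP; split; lia.
  by apply/andP; split; lia.
have ep1 : e a p.+1 = 1.
  by rewrite /= nx nr ?ind_pm1 ?xr //; apply/andP; split; lia.
set g : rat := (-1) ^+ t * ('C(n, t))%:R.
have partA : \sum_(0 <= i < p.+1) G (del i a) * (e a i.+1 - e a i) = g.
  rewrite big_nat_recr //.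
  rewrite (eq_big_nat _ _ (F2 := fun i => g * (e a i.+1 - e a i))); last first.
    move=> i /andP[_ ip]; rewrite {1}E del_catl // G_dec // size_del // -/p /g.
    have -> : (p.-1 + t = n)%N by lia.
    by [].
  rewrite -mulr_sumr telescope_sumr // ep1.
  have dp : del p a = b ++ nseq t.+1 r.
    by rewrite E -[p]addn0 del_catr.
  rewrite dp; case/lastP: b @p E nx nr dp spt e0 ep1 => [|b' y] p E nx nr dp spt e0 ep1.
    have ht : t = n.+1 by move: spt; rewrite /p /=; lia.
    have hb : 'C(n,t) = 0%N by rewrite bin_small //; lia.
    rewrite cat0s G_const /g hb /=; ring.
  have py : pm1 y.
    by move/allP: pa; apply; rewrite E mem_cat mem_rcons in_cons eqxx.
  have ep : e a p = (y != x)%:R.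
    have ny : nth 0 a (size b') = y.
      by rewrite E nth_cat size_rcons ltnS leqnn nth_rcons ltnn eqxx.
    have -> : e a p = vq 2 (mu (nth 0 a (size b')) (nth 0 a p)) by rewrite /p size_rcons.
    by rewrite ny nx ind_pm1.
  rewrite ep; case: eqP => [eyx|ne] /=; first last.
    ring.
  rewrite eyx cat_rcons G_dec // /g.
  have -> : (size b' + t = n)%N by move: spt; rewrite /p size_rcons; lia.
  by rewrite /=; ring.
rewrite (big_cat_nat _ (n:=p.+1)) //=; last by lia.
rewrite partA E G_dec // -E.
destruct t as [|t'].
  rewrite big_geq; last by lia.
  by rewrite addr0 /g !expr0 !bin0 mul1r.
rewrite big_ltn; last by lia.
rewrite big1_seq; last first.
  move=> i; rewrite /= mem_index_iota => /andP[h1 h2].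
  change (G (del i a) * (e a i.+1 - e a i) = 0).
  rewrite !e0 ?subrr ?mulr0 //; apply/andP; split; lia.
have dp1 : del p.+1 a = b ++ x :: nseq t'.+1 r by rewrite E -addn1 del_catr.
rewrite -/(e a p.+2) dp1 G_dec // ep1 e0; last by apply/andP; split; lia.
rewrite -/p.
have -> : (p + t' = n)%N by lia.
have -> : (p + t'.+1 = n.+1)%N by lia.
rewrite /g binS natrD !exprS; ring.
Qed.

Lemma vq_S q y : inS y -> vq q y = 0.
Proof. by move=> /inSP[]->; rewrite ?vq0 ?vq1 ?vqN1. Qed.

Lemma inS_nth (a : seq rat) i : all inS a -> inS (nth 0 a i).
Proof.
move=> /allP H; case: (ltnP i (size a)) => lt; first by apply: H; rewrite mem_nth.
by rewrite nth_default.
Qed.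

Lemma pm1_nth (a : seq rat) i : all pm1 a -> (i < size a)%N -> pm1 (nth 0 a i).
Proof. by move=> /allP H lt; apply: H; rewrite mem_nth. Qed.

Lemma all_pm1 (a : seq rat) : all inS a -> 0 \notin a -> all pm1 a.
Proof.
move=> /allP H n0; apply/allP => x xa; have := H x xa.
by case/inSP => ex; rewrite /pm1 ex ?eqxx ?orbT //; move: n0; rewrite -ex xa.
Qed.

Lemma coord_tsing l ps : coord (tsing l) ps = pure_coord l ps.
Proof. by rewrite /coord big_cons big_nil mul1r addr0. Qed.

Lemma mainL n : forall (a : seq rat) ps, size a = n.+2 -> all inS a ->
  coord (symb a) ps = if 0 \in a then 0 else (ps == nseq n.+1 2%N)%:R * G a.
Proof.
elim: n => [|n IH] a ps.
  case: a => [|x [|y []]] //= _ /and3P[sx sy _].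
  rewrite /symb /= coord_tsing /pure_coord.
  case: ps => [|q [|q' ps]] /=; first by case: ifP => _; rewrite ?mul0r.
    rewrite big_ord1 /= vq_mu //; case: eqP => [->|ne].
      by move: sx sy => /inSP[]-> /inSP[]->; vm_compute.
    have -> : ([:: q] == [:: 2%N]) = false by apply/negbTE; rewrite eqseq_cons; apply/nandP; left; apply/eqP.
    by case: ifP => _ //=; ring.
  have H : (q :: q' :: ps == [:: 2%N]) = false by rewrite eqseq_cons andbF.
  by case: ifP => _ //; rewrite H /=; ring.
move=> sa aS.
rewrite symb_rec ?sa //.
have I1 : iota 0 n.+3.-1 = index_iota 0 n.+2 by rewrite /index_iota subn0.
have I2 : iota 1 n.+3.-2 = index_iota 1 n.+2 by rewrite /index_iota subSS subn0.
have IHi : forall i ps', (i < n.+3)%N -> coord (symb (del i a)) ps' =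
   if 0 \in del i a then 0 else (ps' == nseq n.+1 2%N)%:R * G (del i a).
  by move=> i ps' lt; apply: IH; [rewrite size_del sa | apply: all_del].
case/lastP: ps => [|ps' q].
  rewrite coord_cat coord_tscale !coord_flatten !big1 ?mulr0 ?addr0; try by move=> i _; rewrite coord_tapp0.
  by case: ifP => _ //=; ring.
rewrite coord_cat coord_tscale !coord_flatten I1 I2.
rewrite !big_seq; under eq_bigr => i do rewrite coord_tapp; under [in X in _ + _ * X]eq_bigr => i do rewrite coord_tapp.
case: (boolP (0 \in a)) => a0.
  rewrite !big1 ?mulr0 ?addr0 // => i; rewrite mem_index_iota => /andP[_ lt];
    (rewrite IHi; last by lia);
    (case: (eqVneq (nth 0 a i) 0) => [->|ne];
      [by rewrite /mu eqxx vq_S ?mulr0 // inS_nth | by rewrite mem0_del // mul0r]).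
have pa := all_pm1 a aS a0.
have n0 : forall i, 0 \notin del i a by move=> i; apply: contra a0; apply: mem_del.
have T : forall i, (i < n.+3)%N -> forall z, inS z ->
  coord (symb (del i a)) ps' * vq q (mu (nth 0 a i) z) =
  (ps' == nseq n.+1 2%N)%:R * (q == 2%N)%:R * (G (del i a) * vq 2 (mu (nth 0 a i) z)).
  move=> i lt z zS; rewrite IHi // (negbTE (n0 i)) vq_mu ?inS_nth //.
  by case: (q == 2%N) => /=; ring.
rewrite (eq_bigr (fun i => (ps' == nseq n.+1 2%N)%:R * (q == 2%N)%:R *
   (G (del i a) * vq 2 (mu (nth 0 a i) (nth 0 a i.+1))))); last first.
  by move=> i; rewrite mem_index_iota => /andP[_ lt]; rewrite T ?inS_nth //; lia.
rewrite [X in _ + _ * X](eq_bigr (fun i => (ps' == nseq n.+1 2%N)%:R * (q == 2%N)%:R *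
   (G (del i a) * vq 2 (mu (nth 0 a i) (nth 0 a i.-1))))); last first.
  by move=> i; rewrite mem_index_iota => /andP[_ lt]; rewrite T ?inS_nth //; lia.
rewrite -!big_seq -!mulr_sumr.
have K : \sum_(0 <= i < n.+2) G (del i a) * vq 2 (mu (nth 0 a i) (nth 0 a i.+1))
       - \sum_(1 <= i < n.+2) G (del i a) * vq 2 (mu (nth 0 a i) (nth 0 a i.-1)) = G a.
  rewrite -(comb n a pa sa).
  under [RHS]eq_bigr do rewrite mulrBr.
  rewrite sumrB; congr (_ - _).
  rewrite [RHS]big_ltn // /= mulr0 add0r; apply: eq_big_nat => i /andP[h1 h2].
  case: i h1 h2 => // i h1 h2 /=; rewrite mu_sym // pm1_nth // sa; lia.
rewrite (nseqSr _ n.+1 2%N) eqseq_rcons -K.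
by case: (ps' == _); case: (q == 2%N) => /=; ring.
Qed.

Lemma pm1M x y : pm1 x -> pm1 y -> pm1 (x * y).
Proof. by move=> /pm1P[]-> /pm1P[]->. Qed.

Lemma shat_pm1 (s : seq rat) j : all pm1 s -> (j < size s)%N -> pm1 (shat s j).
Proof.
move=> ps lt; rewrite /shat; apply: (big_ind pm1) => //.
  exact: pm1M.
by move=> i _; apply: pm1_nth => //; have := ltn_ord i; lia.
Qed.

Lemma word_inS (m : seq nat) (s : seq rat) : all pm1 s -> size s = size m ->
  all inS (zeta_word m s).
Proof.
move=> ps ss; apply/allP => x; rewrite /zeta_word mem_cat => /orP[|]; last first.
  by rewrite inE => /eqP ->.
case/flattenP => l /mapP[j]; rewrite mem_rev mem_iota => /andP[_ lt] -> {l}.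
rewrite mem_cat mem_nseq inE => /orP[/andP[_ /eqP ->]|/eqP ->] //.
have := shat_pm1 _ j ps; rewrite ss => /(_ lt) /pm1P[]->//.
Qed.

Lemma word0 (m : seq nat) (s : seq rat) : all (fun mi => 0 < mi)%N m ->
  has (fun mi => mi != 1%N) m -> 0 \in zeta_word m s.
Proof.
move=> /allP pos /(has_nthP 0%N)[j lt ne].
have := pos _ (mem_nth 0%N lt) => gt.
rewrite /zeta_word mem_cat; apply/orP; left; apply/flattenP.
exists (nseq (nth 0%N m j).-1 0 ++ [:: shat s j]).
  by apply: map_f; rewrite mem_rev mem_iota lt.
rewrite mem_cat mem_nseq eqxx andbT; apply/orP; left; move: ne gt.
by case: (nth 0%N m j) => [|[|]].
Qed.

Lemma pc_half n ps : pure_coord (nseq n (1/2)) ps = (-1) ^+ n * (ps == nseq n 2%N)%:R.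
Proof.
rewrite /pure_coord size_nseq; case: eqP => [->|ne]; last first.
  have -> : (ps == nseq n 2%N) = false.
    by apply/negbTE/eqP => E; apply: ne; rewrite E size_nseq.
  by rewrite /= mulr0.
under eq_bigr => i _ do rewrite nth_nseq ltn_ord vqh.
elim: ps => [|p ps IH]; first by rewrite big_ord0.
rewrite big_ord_recl /= IH eqseq_cons.
by case: (p == 2%N); case: (ps == _) => /=; rewrite exprS; ring.
Qed.

Theorem proposition4 :
  (forall (m : seq nat) (s : seq rat),
     (0 < size m)%N -> size s = size m ->
     all (fun mi => 0 < mi)%N m ->
     all (fun si => (si == 1) || (si == -1)) s ->
     has (fun mi => mi != 1%N) m ->
     (nth 0%N m 0, nth 0 s 0) != (1%N, 1) ->
     teq (zeta_symb m s) [::])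
  /\
  (forall (n : nat) (s : seq rat),
     (0 < n)%N -> size s = n ->
     nth 0 s 0 = -1 ->
     all (fun si => (si == 1) || (si == -1)) s ->
     teq (zeta_symb (nseq n 1%N) s) (tsing (nseq n (1 / 2)))).
Proof.
split.
  move=> m s _ ss pos ps hm _ ts.
  have w0 := word0 m s pos hm.
  have wS := word_inS m s ps ss.
  have : (2 <= size (zeta_word m s))%N.
    move: w0; rewrite /zeta_word mem_cat size_cat /= => /orP[|]; last by rewrite inE.
    by case: (flatten _) => //= _ l _; lia.
  case E: (size (zeta_word m s)) => [|[|k]] // _.
  rewrite /zeta_symb coord_tscale /symb (mainL _ _ ts E wS) w0 mulr0.
  by rewrite /coord big_nil.
move=> [|n] // s _ ss s0 ps ts.
have ew : zeta_word (nseq n.+1 1%N) s =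
    [seq shat s j | j <- rev (iota 1 n)] ++ -1 :: nseq 1 1.
  rewrite /zeta_word size_nseq.
  have -> : [seq nseq (nth 0%N (nseq n.+1 1%N) j).-1 0 ++ [:: shat s j] | j <- rev (iota 0 n.+1)]
      = [seq [:: shat s j] | j <- rev (iota 0 n.+1)].
    by apply/eq_in_map => j; rewrite mem_rev mem_iota => /andP[_ lt]; rewrite nth_nseq lt.
  rewrite flatten_map1 /= rev_cons map_rcons cat_rcons.
  by rewrite /shat big_ord1 s0.
have wp : all pm1 (zeta_word (nseq n.+1 1%N) s).
  apply/allP => x; rewrite ew mem_cat => /orP[/mapP[j]|].
    rewrite mem_rev mem_iota => /andP[_ lt] ->; apply: shat_pm1 => //; lia.
  by rewrite !inE => /orP[]/eqP->.
have w0 : 0 \notin zeta_word (nseq n.+1 1%N) s.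
  by apply/negP => /(allP wp).
have sw : size (zeta_word (nseq n.+1 1%N) s) = n.+2.
  by rewrite ew size_cat /= size_map size_rev size_iota; lia.
have wS : all inS (zeta_word (nseq n.+1 1%N) s).
  by apply/allP => x /(allP wp) /pm1P[]->.
rewrite /zeta_symb coord_tscale /symb (mainL _ _ ts sw wS) (negbTE w0) coord_tsing pc_half.
rewrite ew G_dec // sumn_nseq mul1n.
by rewrite /= bin0 expr0 mul1r mulr1.
Qed.
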